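(* Let $F$ be a Banach lattice and $\tau$ a boundedly exhaustive linear topology on $F$ weaker than the norm topology. (i) If $E\subset F$ is a closed subspace on which $\tau$ agrees with the norm topology, then $E$ is $\infty$-dispersed; if every $\tau$-null sequence in $E$ is norm-null, then $E$ is dispersed. (ii) If a bounded operator $T:F\to H$ complements $\tau$, then $T$ is $\infty$-DNS; if $T$ sequentially complements $\tau$, then $T$ is DNS.
   Context: $\tau$ is boundedly exhaustive if every norm-bounded disjoint sequence ($|f_n|\wedge|f_m|=0$, $n\neq m$) is $\tau$-null. $T$ complements (resp. sequentially complements) $\tau$ if no net (resp. sequence) $(f_p)$ in the unit sphere $\mathrm{S}_F$ is $\tau$-null with $\|Tf_p\|\to0$. $T$ is DNS if no disjoint $(f_n)\subset\mathrm{S}_F$ has $\|Tf_n\|\to0$; $\infty$-DNS if there is $r>0$ with $\liminf_n\|Tf_n\|>r$ for all disjoint $(f_n)\subset\mathrm{S}_F$. $E$ is dispersed if $\liminf_n d(f_n,E)>0$ for all disjoint $(f_n)\subset\mathrm{S}_F$ (equivalently no unit vectors $e_n\in E$ and disjoint $f_n$ with $\|e_n-f_n\|\to0$); $\infty$-dispersed if there is $r>0$ with $\liminf_n d(f_n,E)>r$ for all disjoint $(f_n)\subset\mathrm{S}_F$. *)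

(* Defs.v *)
From HB Require Import structures.
From mathcomp Require Import all_boot all_order all_algebra.
From mathcomp Require Import all_classical all_reals all_analysis.
Set Implicit Arguments. Unset Strict Implicit. Unset Printing Implicit Defensive.
Import Order.TTheory GRing.Theory Num.Theory.
Import numFieldNormedType.Exports.
Local Open Scope classical_set_scope.
Local Open Scope ring_scope.

Record banach_lattice (R : realType) (F : completeNormedModType R) := BanachLattice {
  bl_le : F -> F -> Prop;
  bl_sup : F -> F -> F;
  bl_refl : forall x, bl_le x x;
  bl_trans : forall x y z, bl_le x y -> bl_le y z -> bl_le x z;
  bl_antisym : forall x y, bl_le x y -> bl_le y x -> x = y;
  bl_add : forall x y z, bl_le x y -> bl_le (x + z) (y + z);
  bl_scale : forall (a : R) x y, 0 <= a -> bl_le x y -> bl_le (a *: x) (a *: y);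
  bl_sup_ubl : forall x y, bl_le x (bl_sup x y);
  bl_sup_ubr : forall x y, bl_le y (bl_sup x y);
  bl_sup_least : forall x y z, bl_le x z -> bl_le y z -> bl_le (bl_sup x y) z;
  bl_norm_mono : forall x y,
     bl_le (bl_sup x (- x)) (bl_sup y (- y)) -> `|x| <= `|y|
}.

Section BL.
Variables (R : realType) (F : completeNormedModType R) (L : banach_lattice F).

Definition bl_abs (x : F) : F := bl_sup L x (- x).
Definition bl_inf (x y : F) : F := - bl_sup L (- x) (- y).

Definition disjoint_seq (f : nat -> F) : Prop :=
  forall n m : nat, n <> m -> bl_inf (bl_abs (f n)) (bl_abs (f m)) = 0.

Definition in_sphere_seq (f : nat -> F) : Prop := forall n, `|f n| = 1.

Definition dist_set (E : set F) (x : F) : R := inf [set `|x - e| | e in E].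

Definition liminf_R (u : nat -> R) : \bar R := limn_einf (fun n => (u n)%:E).

Definition dispersed (E : set F) : Prop :=
  forall f : nat -> F, disjoint_seq f -> in_sphere_seq f ->
    (0 < liminf_R (fun n => dist_set E (f n)))%E.

Definition infty_dispersed (E : set F) : Prop :=
  exists2 r : R, 0 < r & forall f : nat -> F, disjoint_seq f -> in_sphere_seq f ->
    (r%:E < liminf_R (fun n => dist_set E (f n)))%E.

Definition DNS (H : normedModType R) (T : F -> H) : Prop :=
  ~ exists f : nat -> F, [/\ disjoint_seq f, in_sphere_seq f &
       (fun n => `|T (f n)|) @ \oo --> (0 : R)].

Definition infty_DNS (H : normedModType R) (T : F -> H) : Prop :=
  exists2 r : R, 0 < r & forall f : nat -> F, disjoint_seq f -> in_sphere_seq f ->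
    (r%:E < liminf_R (fun n => `|T (f n)|%R))%E.
End BL.

Record dirset := DirSet {
  dcar :> Type;
  dle : dcar -> dcar -> Prop;
  dle_refl : forall a, dle a a;
  dle_trans : forall a b c, dle a b -> dle b c -> dle a c;
  dle_dir : forall a b, exists c, dle a c /\ dle b c;
  d_inh : inhabited dcar
}.

Definition eventually (D : dirset) (P : D -> Prop) : Prop :=
  exists i0 : D, forall i, dle i0 i -> P i.

Section Topo.
Variables (R : realType) (F : normedModType R).

(* tau is given by its family of open sets; it is a linear (vector space)
   topology: a topology for which addition F x F -> F and scalar
   multiplication R x F -> F are (jointly) continuous. *)
Definition linear_topology (tau : set (set F)) : Prop :=
  [/\ tau setT /\ tau set0,
      (forall U V, tau U -> tau V -> tau (U `&` V)),
      (forall S : set (set F), S `<=` tau -> tau (\bigcup_(U in S) U)),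
      (forall W x y, tau W -> W (x + y) ->
         exists U V, [/\ tau U, tau V, U x, V y &
                         forall u v, U u -> V v -> W (u + v)]) &
      (forall W (a : R) x, tau W -> W (a *: x) ->
         exists2 eps : R, 0 < eps & exists U, [/\ tau U, U x &
            forall (b : R) u, `|b - a| < eps -> U u -> W (b *: u)])].

Definition weaker_than_norm (tau : set (set F)) : Prop :=
  forall U, tau U -> open U.

Definition tau_null_net (tau : set (set F)) (D : dirset) (f : D -> F) : Prop :=
  forall U, tau U -> U 0 -> eventually (fun p => U (f p)).

Definition tau_null_seq (tau : set (set F)) (f : nat -> F) : Prop :=
  forall U, tau U -> U 0 -> \forall n \near \oo, U (f n).

Definition agrees_on (tau : set (set F)) (E : set F) : Prop :=
  (forall U, tau U -> exists W, open W /\ W `&` E = U `&` E) /\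
  (forall W, open W -> exists U, tau U /\ U `&` E = W `&` E).

Definition closed_subspace (E : set F) : Prop :=
  [/\ closed E, E 0,
      (forall x y, E x -> E y -> E (x + y)) &
      (forall (a : R) x, E x -> E (a *: x))].
End Topo.

Section Ops.
Variables (R : realType) (F : completeNormedModType R) (L : banach_lattice F).

Definition boundedly_exhaustive (tau : set (set F)) : Prop :=
  forall f : nat -> F, disjoint_seq L f ->
    (exists M : R, forall n, `|f n| <= M) -> tau_null_seq tau f.

Definition bounded_op (H : normedModType R) (T : F -> H) : Prop :=
  exists C : R, forall x, `|T x| <= C * `|x|.

Definition complements (tau : set (set F)) (H : normedModType R) (T : F -> H) : Prop :=
  ~ exists (D : dirset) (f : D -> F),
      [/\ (forall p, `|f p| = 1), tau_null_net tau f &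
          forall eps : R, 0 < eps -> eventually (fun p => `|T (f p)| < eps)].

Definition seq_complements (tau : set (set F)) (H : normedModType R) (T : F -> H) : Prop :=
  ~ exists f : nat -> F,
      [/\ (forall n, `|f n| = 1), tau_null_seq tau f &
          (fun n => `|T (f n)|) @ \oo --> (0 : R)].
End Ops.

(* Main.v *)
Require Import Defs.
From HB Require Import structures.
From mathcomp Require Import all_boot all_order all_algebra.
From mathcomp Require Import all_classical all_reals all_analysis.
Import Order.TTheory GRing.Theory Num.Theory.
Import numFieldNormedType.Exports.
Local Open Scope classical_set_scope.
Local Open Scope ring_scope.

Lemma near_oo_ex (P : nat -> Prop) : (\forall n \near \oo, P n) ->
  exists N, forall n, (N <= n)%N -> P n.
Proof. by case=> N _ HN; exists N => n /HN. Qed.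

Lemma ex_near_oo (P : nat -> Prop) N : (forall n, (N <= n)%N -> P n) ->
  \forall n \near \oo, P n.
Proof. by move=> HN; exists N. Qed.

Lemma liminfE (R : realType) (u : nat -> R) :
  liminf_R u = ereal_sup (range (einfs (fun n => (u n)%:E))).
Proof.
rewrite /liminf_R limn_einf_lim; apply/cvg_lim => //; exact: cvg_einfs_sup.
Qed.

Lemma liminf_gt (R : realType) (u : nat -> R) (r s : R) N : r < s ->
  (forall n, (N <= n)%N -> s <= u n) -> (r%:E < liminf_R u)%E.
Proof.
move=> rs Hs; rewrite liminfE; apply: (@lt_le_trans _ _ s%:E); first by rewrite lte_fin.
apply: (@le_trans _ _ (einfs (fun n => (u n)%:E) N)); last first.
  by apply: ereal_sup_ubound; exists N.
rewrite /einfs /=; apply: le_ereal_inf_tmp => _ [k /= Nk <-]; rewrite lee_fin; exact: Hs.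
Qed.

Lemma liminf_small (R : realType) (u : nat -> R) (r : R) :
  ~ (r%:E < liminf_R u)%E -> forall eps, 0 < eps -> forall N,
  exists n, (N <= n)%N /\ u n < r + eps.
Proof.
move=> /negP; rewrite -leNgt liminfE => H eps e0 N.
have : (einfs (fun n => (u n)%:E) N < (r + eps)%:E)%E.
  apply: (@le_lt_trans _ _ r%:E); last by rewrite lte_fin ltrDl.
  apply: le_trans H; apply: ereal_sup_ubound; exists N => //.
move=> /ereal_inf_lt [_ [k /= Nk <-]]; rewrite lte_fin => h; by exists k.
Qed.
Set Implicit Arguments. Unset Strict Implicit.

Lemma tau_ball (R : realType) (F : normedModType R) (tau : set (set F))
  (hweak : weaker_than_norm tau) U : tau U -> U 0 ->
  exists2 d : R, 0 < d & forall x : F, `|x| < d -> U x.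
Proof.
move=> tU U0.
have : nbhs (0 : F) U by apply: open_nbhs_nbhs; split; [exact: hweak|].
move=> /nbhs_norm0P [d /= d0 Hd]; exists d => // x hx; exact: Hd.
Qed.

Lemma tau_add (R : realType) (F : normedModType R) (tau : set (set F))
  (htau : linear_topology tau) U : tau U -> U 0 ->
  exists U1 V1, [/\ tau U1, tau V1, U1 0, V1 0 &
     forall u v, U1 u -> V1 v -> U (u + v)].
Proof.
case: htau => _ _ _ hadd _ tU U0.
have h00 : U (0 + 0) by rewrite addr0.
have [U1 [V1 [? ? ? ? H]]] := hadd U 0 0 tU h00.
by exists U1, V1.
Qed.

Lemma part1a (R : realType) (F : completeNormedModType R)
  (L : banach_lattice F) (tau : set (set F))
  (htau : linear_topology tau) (hweak : weaker_than_norm tau)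
  (hbe : boundedly_exhaustive L tau) (E : set F) :
  closed_subspace E -> agrees_on tau E -> infty_dispersed L E.
Proof.
case=> _ E0 _ _ [_ hag].
have [U [tU UE]] := hag (ball (0 : F) (2^-1)) (ball_open _ _).
have U0 : U 0.
  have : (ball (0:F) (2^-1) `&` E) 0 by split => //; apply: ballxx.
  by rewrite -UE => -[].
have [U1 [V1 [tU1 tV1 U10 V10 hUV]]] := tau_add htau tU U0.
have [d d0 hd] := tau_ball hweak tV1 V10.
pose r0 := Num.min d (2^-1).
have r00 : 0 < r0 by rewrite lt_min d0 invr_gt0 ltr0n.
exists (r0 / 2); first by rewrite divr_gt0.
move=> f fd fs.
have [N hN] : exists N, forall n, (N <= n)%N -> U1 (f n).
  have tn : tau_null_seq tau f by apply: (hbe f fd); exists 1 => n; rewrite fs.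
  exact: near_oo_ex _ (tn U1 tU1 U10).
apply: (@liminf_gt _ _ _ r0 N); first by rewrite ltr_pdivrMr // ltr_pMr // ltr1n.
move=> n /hN Uf; apply: lb_le_inf; first by exists `|f n - 0|, 0.
move=> _ [e Ee <-]; rewrite leNgt; apply/negP => hlt.
have Ve : V1 (e - f n).
  apply: hd; rewrite -normrN opprB; apply: lt_le_trans hlt _; by rewrite ge_min lexx.
have := hUV _ _ Uf Ve; rewrite addrC subrK => Ue.
have : (U `&` E) e by [].
rewrite UE => -[] /= e12 _.
move: e12; rewrite -ball_normE /ball_ /= sub0r normrN => e12.
have : `|f n| <= `|f n - e| + `|e|.
  by rewrite -[X in `|X|](subrK e) ler_normD.
rewrite fs; apply/negP; rewrite -ltNge.
have r12 : r0 <= 2^-1 by rewrite ge_min lexx orbT.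
have := ltrD (lt_le_trans hlt r12) e12.
suff -> : 2^-1 + 2^-1 = 1 :> R by [].
by rewrite -[X in X + _]mul1r -[X in _ + X]mul1r -splitr.
Qed.

Section NDir.
Variables (R : realType) (F : normedModType R) (tau : set (set F)).
Hypothesis (htT : tau setT) (hI : forall U V, tau U -> tau V -> tau (U `&` V)).

Definition Dc := {p : set F * R | tau p.1 /\ p.1 0 /\ 0 < p.2}.
Definition Dle (a b : Dc) := (sval b).1 `<=` (sval a).1 /\ (sval b).2 <= (sval a).2.

Lemma Dle_refl a : Dle a a. Proof. by split. Qed.
Lemma Dle_trans a b c : Dle a b -> Dle b c -> Dle a c.
Proof. move=> [h1 h2] [h3 h4]; split; [exact: subset_trans h3 h1 | exact: le_trans h4 h2]. Qed.
Lemma Dle_dir a b : exists c, Dle a c /\ Dle b c.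
Proof.
case: a b => [[U r] [tU [U0 r0]]] [[V s] [tV [V0 s0]]].
have hc : tau (U `&` V) /\ (U `&` V) 0 /\ 0 < Num.min r s.
  by split; [exact: hI|split; [by []|rewrite lt_min r0 s0]].
exists (exist _ (U `&` V, Num.min r s) hc); split; split => /=.
- by move=> x [].
- by rewrite ge_min lexx.
- by move=> x [].
- by rewrite ge_min lexx orbT.
Qed.
Lemma D_inh : inhabited Dc.
Proof.
have h : tau (@setT F) /\ (@setT F) 0 /\ (0 : R) < 1 by [].
exact: inhabits (exist _ (setT, 1) h).
Qed.

Definition Ndir : dirset := DirSet Dle_refl Dle_trans Dle_dir D_inh.
End NDir.

Lemma part2a (R : realType) (F : completeNormedModType R)
  (L : banach_lattice F) (tau : set (set F))
  (htau : linear_topology tau) 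
  (hbe : boundedly_exhaustive L tau) (H : completeNormedModType R) (T : {linear F -> H}) :
  complements tau T -> infty_DNS L T.
Proof.
move=> hc; apply: contrapT => NI; apply: hc.
have [[htT _] hI _ _ _] := htau.
have key : forall p : Dc (R:=R) tau, exists x : F,
    `|x| = 1 /\ (sval p).1 x /\ `|T x| < (sval p).2.
  case=> [[U r] [tU [U0 r0]]] /=.
  have : ~ (forall f, disjoint_seq L f -> in_sphere_seq f ->
              ((r/2)%:E < liminf_R (fun n => `|T (f n)|%R))%E).
    by move=> h; apply: NI; exists (r/2) => //; rewrite divr_gt0.
  move=> /existsNP [f] /not_implyP [fd] /not_implyP [fs] hl.
  have tn : tau_null_seq tau f by apply: (hbe f fd); exists 1 => n; rewrite fs.
  have [N hN] := near_oo_ex _ (tn U tU U0).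
  have [n [Nn hn]] := @liminf_small _ _ _ hl (r/2) (divr_gt0 r0 (ltr0n _ 2)) N.
  exists (f n); split; first exact: fs.
  split; first exact: hN.
  by move: hn; rewrite -splitr.
exists (Ndir htT hI), (fun p => sval (cid (key p))); split.
- by move=> p; case: (cid (key p)) => x [].
- move=> U tU U0.
  have h : tau U /\ U 0 /\ (0 : R) < 1 by [].
  exists (exist _ (U, 1) h) => p [hp _]; have [_ [hx _]] := svalP (cid (key p)).
  exact: hp.
- move=> eps e0.
  have h : tau (@setT F) /\ (@setT F) 0 /\ 0 < eps by [].
  exists (exist _ (setT, eps) h) => p [_ hp]; have [_ [_ hx]] := svalP (cid (key p)).
  exact: lt_le_trans hx hp.
Qed.

Lemma invS_small (R : realType) (d : R) : 0 < d ->
  exists N, forall k, (N <= k)%N -> k.+1%:R^-1 < d.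
Proof.
move=> d0; exact: near_oo_ex _ (near_infty_natSinv_lt (PosNum d0)).
Qed.

Lemma part1b (R : realType) (F : completeNormedModType R)
  (L : banach_lattice F) (tau : set (set F))
  (htau : linear_topology tau) (hweak : weaker_than_norm tau)
  (hbe : boundedly_exhaustive L tau) (E : set F) :
  closed_subspace E ->
  (forall f : nat -> F, (forall n, E (f n)) -> tau_null_seq tau f ->
        f @ \oo --> (0 : F)) ->
  dispersed L E.
Proof.
case=> _ E0 _ _ hE f fd fs; apply: contrapT => hl.
have key : forall N : nat, exists p : nat * F,
    [/\ (N <= p.1)%N, E p.2 & `|f p.1 - p.2| < N.+1%:R^-1].
  move=> N.
  have i0 : (0 : R) < N.+1%:R^-1 by rewrite invr_gt0 ltr0n.
  have [n [Nn hn]] := @liminf_small _ _ 0 hl (N.+1%:R^-1) i0 N.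
  rewrite add0r in hn.
  have ne : [set `|f n - e| | e in E] !=set0 by exists `|f n - 0|, 0.
  have [_ [e Ee <-] he] := inf_lt ne hn.
  by exists (n, e).
pose g N := sval (cid (key N)).
have gP : forall N, [/\ (N <= (g N).1)%N, E (g N).2 & `|f (g N).1 - (g N).2| < N.+1%:R^-1].
  by move=> N; exact: svalP (cid (key N)).
pose a := fix a (k : nat) : nat := if k is k'.+1 then ((g (a k')).1).+1 else 0%N.
pose idx k := (g (a k)).1.
pose e k := (g (a k)).2.
have ak : forall k, (k <= a k)%N.
  elim=> [//|k IH] /=; have [h1 _ _] := gP (a k); apply: leq_ltn_trans IH _.
  exact: leq_trans h1 _.
have idxS : forall k, (idx k < idx k.+1)%N.
  by move=> k; have [h1 _ _] := gP (a k.+1); exact: leq_trans (leqnn _) h1.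
have idxlt : forall k l, (k < l)%N -> (idx k < idx l)%N.
  move=> k; elim=> [//|l IH]; rewrite ltnS leq_eqVlt => /orP [/eqP -> //|kl].
  exact: ltn_trans (IH kl) (idxS l).
have hd : disjoint_seq L (fun k => f (idx k)).
  move=> n m nm; apply: fd => /eqP; apply/negP.
  by case: (ltngtP n m) nm => // + _ => /idxlt => h; [rewrite ltn_eqF|rewrite eq_sym ltn_eqF].
have htn : tau_null_seq tau (fun k => f (idx k)).
  by apply: (hbe _ hd); exists 1 => n; rewrite fs.
have err : forall k, `|f (idx k) - e k| < k.+1%:R^-1.
  move=> k; have [_ _ h] := gP (a k); apply: lt_le_trans h _.
  by rewrite lef_pV2 ?posrE // ler_nat ltnS.
have etn : tau_null_seq tau e.
  move=> U tU U0.
  have [U1 [V1 [tU1 tV1 U10 V10 hUV]]] := tau_add htau tU U0.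
  have [N1 hN1] := near_oo_ex _ (htn U1 tU1 U10).
  have [d d0 hdd] := tau_ball hweak tV1 V10.
  have [N2 hN2] := invS_small d0.
  apply: (@ex_near_oo _ (maxn N1 N2)) => k; rewrite geq_max => /andP [k1 k2].
  have -> : e k = f (idx k) + (e k - f (idx k)) by rewrite addrC subrK.
  apply: hUV; first exact: hN1.
  apply: hdd; rewrite -normrN opprB; exact: lt_trans (err k) (hN2 _ k2).
have eE : forall k, E (e k) by move=> k; have [_ h _] := gP (a k).
have ce := hE e eE etn.
have h20 : (0 : R) < 2^-1 by rewrite invr_gt0 ltr0n.
have [N3 hN3] : exists N3, forall k, (N3 <= k)%N -> `|e k| < 2^-1.
  apply: near_oo_ex; move/cvgr0Pnorm_lt: ce; by apply.
have [N4 hN4] := invS_small h20.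
pose k := maxn N3 N4.
have : `|f (idx k)| <= `|f (idx k) - e k| + `|e k|.
  by rewrite -[X in `|X| <= _](subrK (e k)) ler_normD.
rewrite fs; apply/negP; rewrite -ltNge.
have := ltrD (lt_trans (err k) (hN4 k (leq_maxr N3 N4))) (hN3 k (leq_maxl N3 N4)).
suff -> : 2^-1 + 2^-1 = 1 :> R by [].
by rewrite -[X in X + _]mul1r -[X in _ + X]mul1r -splitr.
Qed.

Unset Implicit Arguments.
Theorem mainTheorem14 (R : realType) (F : completeNormedModType R)
  (L : banach_lattice F) (tau : set (set F))
  (htau : linear_topology tau) (hweak : weaker_than_norm tau)
  (hbe : boundedly_exhaustive L tau) :
  (* (i) *)
  (forall E : set F, closed_subspace E -> agrees_on tau E ->
     infty_dispersed L E) /\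
  (forall E : set F, closed_subspace E ->
     (forall f : nat -> F, (forall n, E (f n)) -> tau_null_seq tau f ->
        f @ \oo --> (0 : F)) ->
     dispersed L E) /\
  (* (ii) *)
  (forall (H : completeNormedModType R) (T : {linear F -> H}),
     bounded_op T -> complements tau T -> infty_DNS L T) /\
  (forall (H : completeNormedModType R) (T : {linear F -> H}),
     bounded_op T -> seq_complements tau T -> DNS L T).
Proof.
split; first by move=> E; exact: part1a htau hweak hbe E.
split; first by move=> E; exact: part1b htau hweak hbe E.
split; first by move=> H T _; exact: (@part2a R F L tau htau hbe H T).
move=> H T _ hc [f [fd fs fT]]; apply: hc; exists f; split => //.
by apply: (hbe f fd); exists 1 => n; rewrite fs.
Qed.
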